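(* Let $(X,d^X)$ and $(Y,d^Y)$ be compact metric spaces, let $f$ be a homeomorphism of $X$, let $g$ be a homeomorphism of $Y$, and let $h:X\to Y$ be a homeomorphism. Then: (1) $U_f(X)=U_{f^{-1}}(X)$; (2) $U_{h\circ f\circ h^{-1}}(Y)=h(U_f(X))$; (3) for each $k\in\mathbb{Z}$, the set $U_{f^k}(X)$ is invariant under $f$; in particular $U_f(X)$ is invariant under $f$; (4) $U_{f\times g}(X\times Y)=U_f(X)\times U_g(Y)$, where $X\times Y$ carries the maximum metric $D((x_1,y_1),(x_2,y_2))=\max\{d^X(x_1,x_2),d^Y(y_1,y_2)\}$; (5) $M_f(X)=M_{f^{-1}}(X)$; (6) $M_{h\circ f\circ h^{-1}}(Y)=h(M_f(X))$; (7) for each $k\in\mathbb{Z}$, the set $M_{f^k}(X)$ is invariant under $f$; in particular $M_f(X)$ is invariant under $f$.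
   Context: For a homeomorphism $f$ of a compact metric space $(X,d)$: $B(x,\epsilon)=\{y: d(x,y)<\epsilon\}$ and $\mathcal{O}_f(x)=\{f^n(x):n\in\mathbb{Z}\}$. $f$ is expansive on a subset $A\subset X$ with expansivity constant $\mathfrak{c}>0$ if for every pair of distinct $x,y\in A$ there is $n\in\mathbb{Z}$ with $d(f^n(x),f^n(y))>\mathfrak{c}$. A point $x$ is a uniformly expansive point of $f$ if there is $\mathfrak{c}>0$ such that $f$ is expansive on $B(x,\mathfrak{c})$ with expansivity constant $\mathfrak{c}$; $U_f(X)$ denotes the set of uniformly expansive points of $f$. A point $x$ is a minimally expansive point of $f$ if there is $\mathfrak{c}>0$ such that for each $y\in B(x,\mathfrak{c})$, $f$ is expansive on $\overline{\mathcal{O}_f(y)}$ with expansivity constant $\mathfrak{c}$; $M_f(X)$ denotes the set of minimally expansive points of $f$. *)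

(* Defs.v *)
From HB Require Import structures.
From mathcomp Require Import all_boot all_order all_algebra.
From mathcomp Require Import all_classical all_reals all_analysis.
Set Implicit Arguments. Unset Strict Implicit. Unset Printing Implicit Defensive.
Import Order.TTheory GRing.Theory Num.Theory.
Local Open Scope classical_set_scope.
Local Open Scope ring_scope.

Section Defs.
Context {R : realType} {X : topologicalType}.

Definition homeo_pair {Y : topologicalType} (f : X -> Y) (finv : Y -> X) : Prop :=
  cancel f finv /\ cancel finv f /\ continuous f /\ continuous finv.

Definition iterz (f finv : X -> X) (n : int) : X -> X :=
  match n with
  | Posz k => iter k f
  | Negz k => iter k.+1 finv
  end.

Definition orbitz (f finv : X -> X) (x : X) : set X :=
  [set iterz f finv n x | n in [set: int]].

Definition dball (d : X -> X -> R) (x : X) (e : R) : set X := [set y | d x y < e].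

Definition expansive_on (d : X -> X -> R) (f finv : X -> X) (A : set X) (c : R) :=
  forall x y, A x -> A y -> x <> y ->
    exists n : int, c < d (iterz f finv n x) (iterz f finv n y).

Definition Uexp (d : X -> X -> R) (f finv : X -> X) : set X :=
  [set x | exists c : R, 0 < c /\ expansive_on d f finv (dball d x c) c].

Definition Mexp (d : X -> X -> R) (f finv : X -> X) : set X :=
  [set x | exists c : R, 0 < c /\
     forall y, dball d x c y -> expansive_on d f finv (closure (orbitz f finv y)) c].

End Defs.

Definition maxdist {R : realType} {X Y : metricType R} (p q : X * Y) : R :=
  Num.max (mdist p.1 q.1) (mdist p.2 q.2).

(* Main.v *)
Require Import Defs.
From HB Require Import structures.
From mathcomp Require Import all_boot all_order all_algebra.
From mathcomp Require Import all_classical all_reals all_analysis.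
Import Order.TTheory GRing.Theory Num.Theory.
Local Open Scope classical_set_scope.
Local Open Scope ring_scope.
Lemma ucont (R : realType) (X Y : metricType R) (k : Y -> X) :
  compact [set: Y] -> continuous k -> forall c : R, 0 < c ->
  exists2 e : R, 0 < e & forall a b, mdist a b < e -> mdist (k a) (k b) < c.
Proof.
move=> cY ck c c0; apply: contrapT => H.
pose S (e : R) := [set a | exists b, mdist a b < e /\ c <= mdist (k a) (k b)].
have Se : forall e, 0 < e -> S e !=set0.
  move=> e e0; apply: contrapT => nS; apply: H; exists e => // a b ab.
  rewrite ltNge; apply/negP => cab; by apply: nS; exists a; exists b; split.
pose F := filter_from [set e : R | 0 < e] S.
have FF : Filter F.
  apply: filter_from_filter; first by exists 1; rewrite /= ltr01.
  move=> i j /= i0 j0; exists (Num.min i j); first by rewrite /= lt_min i0 j0.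
  move=> a0; rewrite /S /= => -[b0 [ab cab]]; split; exists b0; split => //.
    by apply: (lt_le_trans ab); rewrite ge_min lexx.
  by apply: (lt_le_trans ab); rewrite ge_min lexx orbT.
have PF : ProperFilter F by apply: filter_from_proper.
have [y [_ cly]] := cY F PF (ex_intro2 _ _ 1 ltr01 (fun _ _ => I)).
have c2 : 0 < c / 2 by rewrite divr_gt0.
have /metricType_numDomainType.cvgr_dist_lt/(_ _ c2) := ck y.
move=> /metricType_numDomainType.nbhs_mdistP [d /= d0 Hd].
have [] := cly (S (d/2)) [set t | mdist y t < d/2].
- by exists (d/2) => //=; rewrite divr_gt0.
- by rewrite -metricType_numDomainType.filter_from_mdist_nbhs; exists (d/2) => //=; rewrite divr_gt0.
move=> a [[b [ab cab]] ya].
have yb : mdist y b < d.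
  by rewrite (le_lt_trans (metric_triangle _ a _))// [d]splitr ltrD.
have ya' : mdist y a < d.
  by apply: (lt_trans ya); rewrite ltr_pdivrMr// ltr_pMr// ltr1n.
have := Hd _ ya'; have := Hd _ yb => /= h1 h2.
have : mdist (k a) (k b) < c.
  rewrite (le_lt_trans (metric_triangle _ (k y) _))// [c]splitr ltrD//.
  by rewrite metric_sym.
by rewrite ltNge cab.
Qed.

Section Iter.
Context {T : topologicalType}.

Lemma iterz_inv (f finv : T -> T) n x :
  iterz finv f n x = iterz f finv (- n) x.
Proof. by case: n => [[|k]|k]. Qed.

Lemma iterz_comm (f finv : T -> T) : cancel f finv -> cancel finv f ->
  forall n x, f (iterz f finv n x) = iterz f finv n (f x).
Proof.
move=> fK fVK [k|k] x /=; first by rewrite -iterS iterSr.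
by rewrite fVK -iterS iterSr fK.
Qed.

Lemma exp_swap (R : realType) (d : T -> T -> R) (f finv : T -> T) A c :
  expansive_on d f finv A c -> expansive_on d finv f A c.
Proof.
move=> H x y Ax Ay xy; have [n Hn] := H x y Ax Ay xy.
by exists (- n); rewrite !(iterz_inv f finv) opprK.
Qed.

Lemma orbitz_swap (f finv : T -> T) y : orbitz finv f y = orbitz f finv y.
Proof.
apply/seteqP; split => z [n _ <-].
  by exists (- n) => //; rewrite (iterz_inv f finv).
by exists (- n) => //; rewrite (iterz_inv f finv) opprK.
Qed.

End Iter.

Lemma iterz_conj (T U : topologicalType) (h : T -> U) (hinv : U -> T)
  (F Finv : T -> T) : cancel h hinv -> cancel hinv h ->
  forall n y, iterz (h \o F \o hinv) (h \o Finv \o hinv) n y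
              = h (iterz F Finv n (hinv y)).
Proof.
move=> hK hVK.
have E : forall (G : T -> T) k y, iter k (h \o G \o hinv) y = h (iter k G (hinv y)).
  by move=> G; elim=> [|k IH] y /=; rewrite ?hVK // IH hK.
by move=> [k|k] y; rewrite /iterz E.
Qed.

Lemma closure_hinv (T U : topologicalType) (h : T -> U) (hinv : U -> T)
  (A : set T) : continuous hinv -> cancel h hinv ->
  forall z, closure (h @` A) z -> closure A (hinv z).
Proof.
move=> ck hK z cz B nB.
have [w [[a Aa <-] Bw]] := cz _ (ck z B nB).
by exists a; split => //; rewrite /= hK in Bw.
Qed.

Lemma half_lt (R : realType) (e : R) : 0 < e -> e / 2 < e.
Proof. by move=> e0; rewrite ltr_pdivrMr// ltr_pMr// ltr1n. Qed.

Lemma Uconj (R : realType) (X Y : metricType R) (h : X -> Y) (hinv : Y -> X)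
  (F Finv : X -> X) :
  compact [set: Y] -> continuous hinv -> cancel h hinv -> cancel hinv h ->
  h @` Uexp mdist F Finv `<=` Uexp mdist (h \o F \o hinv) (h \o Finv \o hinv).
Proof.
move=> cY ck hK hVK _ [x [c [c0 Hc]] <-].
have [e e0 He] := @ucont R X Y hinv cY ck c c0.
have Hsep : forall u v, c < mdist u v -> e / 2 < mdist (h u) (h v).
  move=> u v cuv; rewrite ltNge; apply/negP => huv.
  have : mdist (hinv (h u)) (hinv (h v)) < c.
    by apply: He; apply: (le_lt_trans huv); rewrite half_lt.
  by rewrite !hK ltNge (ltW cuv).
have Hb : forall y, mdist (h x) y < e / 2 -> mdist x (hinv y) < c.
  move=> y hy; rewrite -{1}(hK x); apply: He; apply: (lt_trans hy).
  by rewrite half_lt.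
exists (e/2); split; first by rewrite divr_gt0.
move=> y1 y2; rewrite /dball /= => y1x y2x y12.
have neq : hinv y1 <> hinv y2 by move=> E; apply: y12; rewrite -(hVK y1) E hVK.
have [n Hn] := Hc (hinv y1) (hinv y2) (Hb _ y1x) (Hb _ y2x) neq.
by exists n; rewrite !iterz_conj //; exact: Hsep.
Qed.

Lemma Mconj (R : realType) (X Y : metricType R) (h : X -> Y) (hinv : Y -> X)
  (F Finv : X -> X) :
  compact [set: Y] -> continuous hinv -> cancel h hinv -> cancel hinv h ->
  h @` Mexp mdist F Finv `<=` Mexp mdist (h \o F \o hinv) (h \o Finv \o hinv).
Proof.
move=> cY ck hK hVK _ [x [c [c0 Hc]] <-].
have [e e0 He] := @ucont R X Y hinv cY ck c c0.
have Hsep : forall u v, c < mdist u v -> e / 2 < mdist (h u) (h v).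
  move=> u v cuv; rewrite ltNge; apply/negP => huv.
  have : mdist (hinv (h u)) (hinv (h v)) < c.
    by apply: He; apply: (le_lt_trans huv); rewrite half_lt.
  by rewrite !hK ltNge (ltW cuv).
have Hb : forall y, mdist (h x) y < e / 2 -> mdist x (hinv y) < c.
  move=> y hy; rewrite -{1}(hK x); apply: He; apply: (lt_trans hy).
  by rewrite half_lt.
exists (e/2); split; first by rewrite divr_gt0.
move=> y; rewrite /dball /= => yx z1 z2 z1c z2c z12.
have Hy := Hc (hinv y) (Hb _ yx).
have neq : hinv z1 <> hinv z2 by move=> E; apply: z12; rewrite -(hVK z1) E hVK.
have sub : closure (orbitz (h \o F \o hinv) (h \o Finv \o hinv) y) `<=`
           closure (h @` orbitz F Finv (hinv y)).
  apply: closureS => z [n _ <-]; rewrite iterz_conj //.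
  by exists (iterz F Finv n (hinv y)) => //; exists n.
have [n Hn] := Hy (hinv z1) (hinv z2)
  (closure_hinv _ _ _ _ _ ck hK _ (sub _ z1c)) (closure_hinv _ _ _ _ _ ck hK _ (sub _ z2c)) neq.
by exists n; rewrite !iterz_conj //; exact: Hsep.
Qed.

Lemma Uconj_eq (R : realType) (X Y : metricType R) (h : X -> Y) (hinv : Y -> X)
  (F Finv : X -> X) : compact [set: X] -> compact [set: Y] -> homeo_pair h hinv ->
  Uexp mdist (h \o F \o hinv) (h \o Finv \o hinv) = h @` Uexp mdist F Finv.
Proof.
move=> cX cY [hK [hVK [hc hic]]]; apply/seteqP; split; last exact: Uconj.
move=> y Hy.
have H := @Uconj R Y X hinv h _ _ cX hc hVK hK (hinv y) (ex_intro2 _ _ y Hy erefl).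
have E1 : hinv \o (h \o F \o hinv) \o h = F by apply/funext => x /=; rewrite !hK.
have E2 : hinv \o (h \o Finv \o hinv) \o h = Finv by apply/funext => x /=; rewrite !hK.
by rewrite E1 E2 in H; exists (hinv y) => //; rewrite hVK.
Qed.

Lemma Mconj_eq (R : realType) (X Y : metricType R) (h : X -> Y) (hinv : Y -> X)
  (F Finv : X -> X) : compact [set: X] -> compact [set: Y] -> homeo_pair h hinv ->
  Mexp mdist (h \o F \o hinv) (h \o Finv \o hinv) = h @` Mexp mdist F Finv.
Proof.
move=> cX cY [hK [hVK [hc hic]]]; apply/seteqP; split; last exact: Mconj.
move=> y Hy.
have H := @Mconj R Y X hinv h _ _ cX hc hVK hK (hinv y) (ex_intro2 _ _ y Hy erefl).
have E1 : hinv \o (h \o F \o hinv) \o h = F by apply/funext => x /=; rewrite !hK.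
have E2 : hinv \o (h \o Finv \o hinv) \o h = Finv by apply/funext => x /=; rewrite !hK.
by rewrite E1 E2 in H; exists (hinv y) => //; rewrite hVK.
Qed.

Lemma iterz_prod (X Y : topologicalType) (f finv : X -> X) (g ginv : Y -> Y) n
  (p : X * Y) :
  iterz (fun p : X * Y => (f p.1, g p.2)) (fun p : X * Y => (finv p.1, ginv p.2)) n p
  = (iterz f finv n p.1, iterz g ginv n p.2).
Proof.
have E : forall (a : X -> X) (b : Y -> Y) k (p : X * Y),
    iter k (fun p : X * Y => (a p.1, b p.2)) p = (iter k a p.1, iter k b p.2).
  move=> a b; elim=> [|k IH] q; first by case: q.
  by rewrite !iterS IH.
by case: n => k; rewrite /iterz E.
Qed.

Lemma Uprod (R : realType) (X Y : metricType R) (f finv : X -> X) (g ginv : Y -> Y) :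
  Uexp maxdist (fun p : X * Y => (f p.1, g p.2)) (fun p : X * Y => (finv p.1, ginv p.2))
    = Uexp mdist f finv `*` Uexp mdist g ginv.
Proof.
apply/seteqP; split.
- move=> [x y] [c [c0 Hc]]; have c0F : (c < 0) = false by rewrite ltNge (ltW c0).
  split.
  + exists c; split => // x1 x2; rewrite /dball /= => h1 h2 x12.
    have [n Hn] := Hc (x1, y) (x2, y)
      (ltac:(by rewrite /dball /maxdist /= mdistxx gt_max h1 c0))
      (ltac:(by rewrite /dball /maxdist /= mdistxx gt_max h2 c0))
      (ltac:(by case)).
    by exists n; move: Hn; rewrite !iterz_prod /maxdist /= mdistxx lt_max c0F orbF.
  + exists c; split => // y1 y2; rewrite /dball /= => h1 h2 y12.
    have [n Hn] := Hc (x, y1) (x, y2)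
      (ltac:(by rewrite /dball /maxdist /= mdistxx gt_max h1 c0))
      (ltac:(by rewrite /dball /maxdist /= mdistxx gt_max h2 c0))
      (ltac:(by case)).
    by exists n; move: Hn; rewrite !iterz_prod /maxdist /= mdistxx lt_max c0F.
- move=> [x y] [[cx [cx0 Hx]] [cy [cy0 Hy]]].
  exists (Num.min cx cy); split; first by rewrite lt_min cx0 cy0.
  move=> [a1 b1] [a2 b2]; rewrite /dball /maxdist /= !gt_max !lt_min.
  move=> /andP[/andP[h1 _] /andP[_ k1]] /andP[/andP[h2 _] /andP[_ k2]] neq.
  case: (pselect (a1 = a2)) => [E|ne].
  + have nb : b1 <> b2 by move=> E'; apply: neq; rewrite E E'.
    have [n Hn] := Hy b1 b2 k1 k2 nb.
    exists n; rewrite !iterz_prod /maxdist /= lt_max; apply/orP; right.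
    by apply: (le_lt_trans _ Hn); rewrite ge_min lexx orbT.
  + have [n Hn] := Hx a1 a2 h1 h2 ne.
    exists n; rewrite !iterz_prod /maxdist /= lt_max; apply/orP; left.
    by apply: (le_lt_trans _ Hn); rewrite ge_min lexx.
Qed.
Theorem proposition2p2 (R : realType) (X Y : metricType R)
  (f finv : X -> X) (g ginv : Y -> Y) (h : X -> Y) (hinv : Y -> X) :
  compact [set: X] -> compact [set: Y] ->
  homeo_pair f finv -> homeo_pair g ginv -> homeo_pair h hinv ->
  (* (1) *)
  Uexp mdist f finv = Uexp mdist finv f /\
  (* (2) *)
  Uexp mdist (h \o f \o hinv) (h \o finv \o hinv) = h @` Uexp mdist f finv /\
  (* (3) *)
  (forall k : int,
     f @` Uexp mdist (iterz f finv k) (iterz f finv (- k)) =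
     Uexp mdist (iterz f finv k) (iterz f finv (- k))) /\
  f @` Uexp mdist f finv = Uexp mdist f finv /\
  (* (4) *)
  Uexp maxdist (fun p : X * Y => (f p.1, g p.2)) (fun p : X * Y => (finv p.1, ginv p.2))
    = Uexp mdist f finv `*` Uexp mdist g ginv /\
  (* (5) *)
  Mexp mdist f finv = Mexp mdist finv f /\
  (* (6) *)
  Mexp mdist (h \o f \o hinv) (h \o finv \o hinv) = h @` Mexp mdist f finv /\
  (* (7) *)
  (forall k : int,
     f @` Mexp mdist (iterz f finv k) (iterz f finv (- k)) =
     Mexp mdist (iterz f finv k) (iterz f finv (- k))) /\
  f @` Mexp mdist f finv = Mexp mdist f finv.
Proof.
move=> cX cY hf hg hh.
have [fK [fVK [fc fic]]] := hf.
have Ecomm : forall n, f \o iterz f finv n \o finv = iterz f finv n.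
  by move=> n; apply/funext => x /=; rewrite iterz_comm // fVK.
have Ef : f \o f \o finv = f by apply/funext => x /=; rewrite fVK.
have Efi : f \o finv \o finv = finv by apply/funext => x /=; rewrite fVK.
split.
  apply/seteqP; split => x [c [c0 H]]; exists c; split => //; exact: exp_swap.
split; first exact: Uconj_eq.
split.
  move=> k; rewrite -(@Uconj_eq R X X f finv (iterz f finv k) (iterz f finv (-k)) cX cX hf).
  by rewrite !Ecomm.
split.
  by rewrite -(@Uconj_eq R X X f finv f finv cX cX hf) Ef Efi.
split; first exact: Uprod.
split.
  apply/seteqP; split => x [c [c0 H]]; exists c; split => // y hy.
    by rewrite (orbitz_swap f finv); exact: exp_swap (H y hy).
  by rewrite -[orbitz f finv y](orbitz_swap f finv); exact: exp_swap (H y hy).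
split; first exact: Mconj_eq.
split.
  move=> k; rewrite -(@Mconj_eq R X X f finv (iterz f finv k) (iterz f finv (-k)) cX cX hf).
  by rewrite !Ecomm.
by rewrite -(@Mconj_eq R X X f finv f finv cX cX hf) Ef Efi.
Qed.
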